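(* Let $\mathcal H$ be a separable complex Hilbert space, $A_1,A_2\in L(\mathcal H)^+$, $B\in L(\mathcal H)$ with closed range, and $G\in L(\mathcal H)$. Then $G$ is an $A_1A_2$-inverse of $B$ if and only if (1) $B^*A_1BG=B^*A_1$ and (2) $R(A_2G)\subseteq N(A_1B)^\perp$.
   Context: $\|z\|_{A}=\langle Az,z\rangle^{1/2}$ for $A\in L(\mathcal H)^+$. For $y\in\mathcal H$, $x_0$ is an $A_1$-least squares solution ($A_1$-LSS) of $Bx=y$ if $\|y-Bx_0\|_{A_1}\le\|y-Bx\|_{A_1}$ for all $x\in\mathcal H$. $G$ is an $A_1$-inverse of $B$ if $Gy$ is an $A_1$-LSS of $Bx=y$ for every $y$. $G$ is an $A_1A_2$-inverse of $B$ if $G$ is an $A_1$-inverse of $B$ and, for each $y\in\mathcal H$, $\|Gy\|_{A_2}\le\|x_0\|_{A_2}$ for every $A_1$-LSS $x_0$ of $Bx=y$. $N(\cdot)$ denotes nullspace. *)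

(* Defs.v *)
(* complex scalars R[i] (mathcomp-real-closed) over a
   realType R, i.e. the field of complex numbers. *)
From HB Require Import structures.
From mathcomp Require Import all_boot all_order all_algebra.
From mathcomp Require Import complex reals.
Set Implicit Arguments.
Unset Strict Implicit.
Unset Printing Implicit Defensive.
Import Order.TTheory GRing.Theory Num.Theory.
Local Open Scope ring_scope.

Section Hilbert.
Variables (R : realType) (H : lmodType R[i]).

Definition is_inner_product (ip : H -> H -> R[i]) : Prop :=
  [/\ (forall (a : R[i]) (x y z : H), ip (a *: x + y) z = a * ip x z + ip y z),
      (forall x y : H, ip x y = Num.conj (ip y x)),
      (forall x : H, 0 <= ip x x) &
      (forall x : H, ip x x = 0 -> x = 0)].

Definition ipnorm (ip : H -> H -> R[i]) (x : H) : R[i] := sqrtC (ip x x).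

Definition cvg_to (ip : H -> H -> R[i]) (u : nat -> H) (l : H) : Prop :=
  forall eps : R[i], 0 < eps ->
    exists N : nat, forall n, (N <= n)%N -> ipnorm ip (u n - l) < eps.

Definition cauchy_seq (ip : H -> H -> R[i]) (u : nat -> H) : Prop :=
  forall eps : R[i], 0 < eps ->
    exists N : nat, forall m n, (N <= m)%N -> (N <= n)%N ->
      ipnorm ip (u m - u n) < eps.

Definition complete_ip (ip : H -> H -> R[i]) : Prop :=
  forall u, cauchy_seq ip u -> exists l, cvg_to ip u l.

Definition separable_ip (ip : H -> H -> R[i]) : Prop :=
  exists d : nat -> H, forall (x : H) (eps : R[i]), 0 < eps ->
    exists n, ipnorm ip (x - d n) < eps.

Definition separable_hilbert (ip : H -> H -> R[i]) : Prop :=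
  [/\ is_inner_product ip, complete_ip ip & separable_ip ip].

Definition bounded_op (ip : H -> H -> R[i]) (T : {linear H -> H}) : Prop :=
  exists M : R[i], forall x, ipnorm ip (T x) <= M * ipnorm ip x.

Definition positive_op (ip : H -> H -> R[i]) (T : {linear H -> H}) : Prop :=
  bounded_op ip T /\ forall x, 0 <= ip (T x) x.

Definition is_adjoint (ip : H -> H -> R[i]) (T Ts : {linear H -> H}) : Prop :=
  forall x y, ip (T x) y = ip x (Ts y).

Definition closed_range (ip : H -> H -> R[i]) (T : {linear H -> H}) : Prop :=
  forall (u : nat -> H) (y : H), cvg_to ip (fun n => T (u n)) y ->
    exists x, T x = y.

Definition Anorm (ip : H -> H -> R[i]) (A : {linear H -> H}) (z : H) : R[i] :=
  sqrtC (ip (A z) z).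

Definition A_LSS (ip : H -> H -> R[i]) (A1 B : {linear H -> H}) (y x0 : H) : Prop :=
  forall x, Anorm ip A1 (y - B x0) <= Anorm ip A1 (y - B x).

Definition A_inverse (ip : H -> H -> R[i]) (A1 B G : {linear H -> H}) : Prop :=
  forall y, A_LSS ip A1 B y (G y).

Definition AA_inverse (ip : H -> H -> R[i]) (A1 A2 B G : {linear H -> H}) : Prop :=
  A_inverse ip A1 B G /\
  forall y x0, A_LSS ip A1 B y x0 -> Anorm ip A2 (G y) <= Anorm ip A2 x0.

End Hilbert.

(* Main.v *)
Require Import Defs.
From HB Require Import structures.
From mathcomp Require Import all_boot all_order all_algebra.
From mathcomp Require Import complex reals.
From mathcomp Require Import ring.
Import Order.TTheory GRing.Theory Num.Theory.
Local Open Scope ring_scope.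
Set Implicit Arguments.

Section Aux.
Variables (R : realType) (H : lmodType R[i]) (ip : H -> H -> R[i]).
Hypothesis hip : is_inner_product ip.

Lemma ipDZl a x y z : ip (a *: x + y) z = a * ip x z + ip y z.
Proof. by case: hip => *; auto. Qed.
Lemma ipsym x y : ip x y = (ip y x)^*.
Proof. by case: hip => *; auto. Qed.
Lemma ippos x : 0 <= ip x x.
Proof. by case: hip => *; auto. Qed.
Lemma ipdef x : ip x x = 0 -> x = 0.
Proof. by case: hip => *; auto. Qed.

Lemma ip0l z : ip 0 z = 0.
Proof.
have h := ipDZl 1 0 0 z; rewrite scaler0 addr0 mul1r in h.
by apply: (addrI (ip 0 z)); rewrite addr0 -h.
Qed.
Lemma ipDl x y z : ip (x + y) z = ip x z + ip y z.
Proof. by rewrite -[x]scale1r ipDZl mul1r scale1r. Qed.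
Lemma ipZl a x z : ip (a *: x) z = a * ip x z.
Proof. by rewrite -[a *: x]addr0 ipDZl ip0l addr0. Qed.
Lemma ipDr x y z : ip z (x + y) = ip z x + ip z y.
Proof. by rewrite ipsym ipDl rmorphD [ip z x]ipsym [ip z y]ipsym. Qed.
Lemma ipZr a x z : ip z (a *: x) = a^* * ip z x.
Proof. by rewrite ipsym ipZl rmorphM [ip z x]ipsym. Qed.
Lemma ip0r z : ip z 0 = 0.
Proof. by rewrite ipsym ip0l rmorph0. Qed.

Lemma core (c q : R[i]) : 0 <= q ->
  (forall t, 0 <= t * c + (t * c)^* + t * t^* * q) -> c = 0.
Proof.
move=> q0 Ht.
set s := (q + 1)^-1.
have q1 : 0 < q + 1 by rewrite ltr_wpDl.
have s0 : 0 < s by rewrite invr_gt0.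
have sr : s^* = s by apply: conj_Creal; apply: ger0_real; apply: ltW.
set n := c * c^*.
have n0 : 0 <= n by apply: mul_conjC_ge0.
have ns0 : 0 <= n * s by rewrite mulr_ge0 // ltW.
have nsr : (n * s)^* = n * s by apply: conj_Creal; apply: ger0_real.
have := Ht (- (c^* * s)).
have -> : - (c^* * s) * c = - (n * s) by rewrite /n; ring.
have e1 : (- (n * s))^* = - (n * s).
  by apply: conj_Creal; rewrite rpredN; apply: ger0_real.
have e2 : (- (c^* * s))^* = - (c * s).
  rewrite rmorphN rmorphM /= sr; congr (- (_ * _)); exact: conjCK.
rewrite e1 e2.
have -> : - (n * s) + - (n * s) + - (c^* * s) * - (c * s) * q
   = (n * s) * (s * q - 2) by rewrite /n; ring.
have sq : s * q - 2 < 0.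
  rewrite subr_lt0 (@le_lt_trans _ _ 1) //; last by rewrite ltr1n.
  rewrite mulrC ler_pdivrMr // mul1r lerDl ler01 //.
move=> H0.
have ns : n * s = 0.
  have [//|hp] := eqVneq (n * s) 0.
  have hp' : 0 < n * s by rewrite lt0r hp ns0.
  move: H0; rewrite pmulr_rge0 // => H0.
  by have := lt_le_trans sq H0; rewrite ltxx.
move/eqP: ns; rewrite mulf_eq0 (negbTE (lt0r_neq0 s0)) orbF.
by rewrite /n mul_conjC_eq0 => /eqP.
Qed.

Lemma cD (u v : R[i]) : (u + v)^* = u^* + v^*. Proof. exact: rmorphD. Qed.
Lemma cM (u v : R[i]) : (u * v)^* = u^* * v^*. Proof. exact: rmorphM. Qed.
Lemma cN (u : R[i]) : (- u)^* = - u^*. Proof. exact: rmorphN. Qed.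
Lemma cK (u : R[i]) : u^*^* = u. Proof. exact: conjCK. Qed.

Variable A : {linear H -> H}.
Hypothesis posA : forall x, 0 <= ip (A x) x.

Lemma Qr x : (ip (A x) x)^* = ip (A x) x.
Proof. by apply: conj_Creal; apply: ger0_real. Qed.

Lemma sa x y : ip (A x) y = ip x (A y).
Proof.
set a := ip (A x) y; set b := ip (A y) x.
have E z w : ip (A (z + w)) (z + w) - ip (A z) z - ip (A w) w
   = ip (A z) w + ip (A w) z.
  rewrite linearD ipDl !ipDr; ring.
have h1 : (a + b)^* = a + b.
  by rewrite -E !cD !cN !Qr.
have h2 : (ip (A x) ('i *: y) + ip (A ('i *: y)) x)^*
    = ip (A x) ('i *: y) + ip (A ('i *: y)) x.
  by rewrite -E !cD !cN !Qr.
rewrite linearZ /= ipZr ipZl -/a -/b conjCi in h2.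
rewrite !cD !cM !cN conjCi opprK in h1 h2.
rewrite ipsym -/b.
have ii : 'i * 'i + 1 = 0 :> R[i] by rewrite -expr2 sqrCi addNr.
apply/eqP; rewrite -subr_eq0.
have : 2 * (a - b^*) = (a + b - (a^* + b^*)) + 'i * (- 'i * a + 'i * b - ('i * a^* + - 'i * b^*))
   + ('i * 'i + 1) * (a - b + a^* - b^*) by ring.
rewrite ii mul0r addr0 h1 h2 !subrr mulr0 addr0 => /eqP.
by rewrite mulf_eq0 pnatr_eq0 orFb.
Qed.

Lemma expand u v : ip (A (u + v)) (u + v)
  = ip (A u) u + ip (A v) u + (ip (A v) u)^* + ip (A v) v.
Proof.
rewrite linearD ipDl !ipDr [ip (A u) v]sa [ip u (A v)]ipsym; ring.
Qed.

Lemma var_ortho u v :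
  (forall t, ip (A u) u <= ip (A (u + t *: v)) (u + t *: v)) -> ip (A v) u = 0.
Proof.
move=> Ht; apply: (@core (ip (A v) u) (ip (A v) v)) => // t.
have := Ht t; rewrite expand linearZ /= !ipZl ipZr -subr_ge0.
have -> : ip (A u) u + t * ip (A v) u + (t * ip (A v) u)^* + t * (t^* * ip (A v) v)
   - ip (A u) u = t * ip (A v) u + (t * ip (A v) u)^* + t * t^* * ip (A v) v by ring.
done.
Qed.

Lemma ortho_var u v : ip (A v) u = 0 ->
  ip (A u) u <= ip (A (u + v)) (u + v).
Proof.
move=> h; rewrite expand h conjC0 !addr0 lerDl; exact: posA.
Qed.

Lemma Q0 z : ip (A z) z = 0 -> A z = 0.
Proof.
move=> hz.
have hw w : ip w (A z) = 0.
  rewrite -sa; apply: var_ortho => t; rewrite hz; exact: posA.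
exact/ipdef/hw.
Qed.

End Aux.

Section Main.
Variables (R : realType) (H : lmodType R[i]) (ip : H -> H -> R[i]).
Hypothesis hip : is_inner_product ip.

Lemma Anorm_le (A : {linear H -> H}) (posA : forall x, 0 <= ip (A x) x) u v :
  Anorm ip A u <= Anorm ip A v <-> ip (A u) u <= ip (A v) v.
Proof. by rewrite /Anorm ler_sqrtC // nnegrE. Qed.

Variables (B Bs A1 : {linear H -> H}).
Hypothesis hadj : is_adjoint ip B Bs.
Hypothesis posA1 : forall x, 0 <= ip (A1 x) x.

Lemma LSS_char y x0 : A_LSS ip A1 B y x0 <-> Bs (A1 (B x0)) = Bs (A1 y).
Proof.
split.
- move=> hL.
  have hh h : ip h (Bs (A1 (y - B x0))) = 0.
    rewrite -hadj -(sa hip A1 posA1); apply: (var_ortho hip A1 posA1) => t.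
    have := hL (x0 - t *: h); rewrite Anorm_le //.
    have -> : y - B (x0 - t *: h) = y - B x0 + t *: B h.
      by rewrite linearB linearZ /= opprD opprK addrA.
    done.
  have := ipdef hip _ (hh _); rewrite !linearB /= => /eqP.
  by rewrite subr_eq0 => /eqP ->.
- move=> he x; rewrite Anorm_le //.
  have -> : y - B x = (y - B x0) + B (x0 - x).
    by rewrite linearB /= addrA subrK.
  apply: (ortho_var hip A1 posA1).
  rewrite (sa hip A1 posA1) hadj !linearB /= he subrr; exact: ip0r.
Qed.
End Main.

Theorem mainTheorem16 (R : realType) (H : lmodType R[i]) (ip : H -> H -> R[i])
  (A1 A2 B Bs G : {linear H -> H}) :
  separable_hilbert ip ->
  positive_op ip A1 -> positive_op ip A2 ->
  bounded_op ip B -> closed_range ip B ->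
  is_adjoint ip B Bs ->
  bounded_op ip G ->
  (AA_inverse ip A1 A2 B G <->
   ((forall x, Bs (A1 (B (G x)))  = Bs (A1 x)) /\
    (forall x z, A1 (B z) = 0 -> ip (A2 (G x)) z = 0))).
Proof.
move=> [hip _ _] [_ p1] [_ p2] _ _ hadj _.
have LSS := @LSS_char _ _ _ hip B Bs A1 hadj p1.
split.
- move=> [hA hmin]; split.
  + by move=> x; exact: ((LSS x (G x)).1 (hA x)).
  + move=> x z hz.
    have e1 : ip (A2 z) (G x) = 0.
      apply: (var_ortho hip A2 p2) => t.
      have := hmin x (G x + t *: z); rewrite Anorm_le //; apply.
      apply/LSS; rewrite !linearD !linearZ /= hz linear0 scaler0 addr0.
      exact: ((LSS x (G x)).1 (hA x)).
    by rewrite ipsym // -(sa hip A2 p2) e1 conjC0.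
- move=> [h1 h2]; split.
  + by move=> y; apply/LSS; exact: h1.
  + move=> y x0 hx0; rewrite Anorm_le //.
    have hz : A1 (B (x0 - G y)) = 0.
      apply: (Q0 hip A1 p1); rewrite (sa hip A1 p1) hadj !linearB /=.
      by rewrite (LSS y x0).1 // h1 subrr ip0r.
    have -> : x0 = G y + (x0 - G y) by rewrite addrC subrK.
    apply: (ortho_var hip A2 p2).
    by rewrite (sa hip A2 p2) ipsym // (h2 y _ hz) conjC0.
Qed.
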